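(* Let $\mathbf{L}_1,\dots,\mathbf{L}_n$ be latent factors and $\mathbf{X}_{\mathbf{t}_1},\mathbf{Y}_{\mathbf{t}_1},\dots,\mathbf{X}_{\mathbf{t}_m},\mathbf{Y}_{\mathbf{t}_m}$ observed variables in a causal graph in which $Pa(\mathbf{X}_{\mathbf{t}_s})=\{\mathbf{L}_1,\dots,\mathbf{L}_n\}$ and $Pa(\mathbf{Y}_{\mathbf{t}_s})\subseteq\{\mathbf{L}_1,\dots,\mathbf{L}_n\}$ for all $s$. Let $\mathcal{F}$ be the smallest family of subsets of $\{\mathbf{L}_1,\dots,\mathbf{L}_n\}$ such that (1) $\emptyset, Pa(\mathbf{X}_{\mathbf{t}_1}), Pa(\mathbf{Y}_{\mathbf{t}_1}),\dots,Pa(\mathbf{X}_{\mathbf{t}_m}),Pa(\mathbf{Y}_{\mathbf{t}_m})\in\mathcal{F}$ and (2) $\mathcal{A},\mathcal{B}\in\mathcal{F}$ implies $\mathcal{A}-\mathcal{B},\ \mathcal{B}-\mathcal{A}\in\mathcal{F}$, where $\mathcal{A}-\mathcal{B}=\mathcal{A}\cap\bar{\mathcal{B}}$. Then $\{\mathbf{L}_1\},\{\mathbf{L}_2\},\dots,\{\mathbf{L}_n\}\in\mathcal{F}$ if and only if for any two distinct latent factors $\mathbf{L}_i\neq\mathbf{L}_j$, their child sets are not identical, $Ch(\mathbf{L}_i)\neq Ch(\mathbf{L}_j)$.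
   Context: $Pa(V)$ denotes the set of parents of $V$ in the causal graph. The child set $Ch(\mathbf{L}_i)$ is the set of observed variables among $\mathbf{X}_{\mathbf{t}_1},\mathbf{Y}_{\mathbf{t}_1},\dots,\mathbf{X}_{\mathbf{t}_m},\mathbf{Y}_{\mathbf{t}_m}$ that have $\mathbf{L}_i$ as a parent. *)

(* Defs.v *)
From mathcomp Require Import all_boot.
Set Implicit Arguments. Unset Strict Implicit. Unset Printing Implicit Defensive.

(* Latent factors L_1..L_n are indexed by 'I_n.
   A causal graph restricted to the data relevant here is given by the
   parent map  pa : observed -> {set 'I_n}  (parents of observed variables
   are latent factors, by hypothesis). *)

Definition obs (m : nat) := ('I_m * bool)%type.
Definition Xv (m : nat) (s : 'I_m) : obs m := (s, false).
Definition Yv (m : nat) (s : 'I_m) : obs m := (s, true).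

Definition Ch (n m : nat) (pa : obs m -> {set 'I_n}) (i : 'I_n) : {set obs m} :=
  [set v | i \in pa v].

Inductive inF (n m : nat) (pa : obs m -> {set 'I_n}) : {set 'I_n} -> Prop :=
  | inF_empty : inF pa set0
  | inF_pa : forall v, inF pa (pa v)
  | inF_diff : forall A B, inF pa A -> inF pa B -> inF pa (A :&: ~: B).

(* Main.v *)
Require Import Defs.
From mathcomp Require Import all_boot.

Lemma inF_I n m (pa : obs m -> {set 'I_n}) A B :
  inF pa A -> inF pa B -> inF pa (A :&: B).
Proof.
move=> hA hB.
have -> : A :&: B = A :&: ~: (A :&: ~: B).
  by apply/setP=> x; rewrite !inE; case: (x \in A); case: (x \in B).
by apply: inF_diff => //; apply: inF_diff.
Qed.

Theorem lemmaA4 (n m : nat) (pa : obs m -> {set 'I_n}) :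
  0 < m ->
  (forall s : 'I_m, pa (Xv s) = [set: 'I_n]) ->
  ((forall i : 'I_n, inF pa [set i]) <->
   (forall i j : 'I_n, i != j -> Ch pa i != Ch pa j)).
Proof.
move=> m0 hX; split.
- move=> hF i j nij; apply/negP=> /eqP eCh.
  have inv : forall A, inF pa A -> (i \in A) = (j \in A).
    move=> A; elim=> [|v|A' B' _ IA _ IB]; first by rewrite !inE.
      have := congr1 (fun S : {set obs m} => v \in S) eCh; by rewrite /Ch !inE.
    by rewrite !inE IA IB.
  have := inv _ (hF i); rewrite !inE eqxx eq_sym => /esym/eqP.
  by move: nij => /eqP.
- move=> hCh i.
  have hT : inF pa [set: 'I_n] by rewrite -(hX (Ordinal m0)); apply: inF_pa.
  set S := fun v : obs m => if i \in pa v then pa v else ~: pa v.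
  have hS : inF pa (\bigcap_(v : obs m) S v).
    apply: (big_ind (inF pa)) => //; first by move=> x y; apply: inF_I.
    move=> v _; rewrite /S; case: ifP => _; first exact: inF_pa.
    have -> : ~: pa v = [set: 'I_n] :&: ~: pa v by rewrite setTI.
    by apply: inF_diff => //; apply: inF_pa.
  have -> : [set i] = \bigcap_(v : obs m) S v; last exact: hS.
  apply/setP=> j; rewrite inE; apply/eqP/bigcapP.
    by move=> ->{j} v _; rewrite /S; case: ifP => // /negbT; rewrite inE.
  move=> hj; case: (eqVneq j i) => // nji.
  have := hCh _ _ nji; rewrite eq_sym => /negP; case.
  apply/eqP/setP=> v; rewrite /Ch !inE.
  move: (hj v isT); rewrite /S.
  by case: (i \in pa v); rewrite ?inE; [move->|move/negbTE->].
Qed.
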